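(* Let $N_1,N_2\in\mathbb{N}$ and suppose $(|p_1\rangle,|q_1\rangle)\in\mathcal{S}_{N_1}$ and $(|p_2\rangle,|q_2\rangle)\in\mathcal{S}_{N_2}$ generate extremal rays. Then $(|p_1\rangle\otimes|p_2\rangle,|q_1\rangle\otimes|q_2\rangle)\in\mathcal{S}_{N_1+N_2}$ and it generates an extremal ray of $\mathcal{S}_{N_1+N_2}$.
   Context: $K=\frac12\begin{pmatrix}-1&1&1&1\\1&-1&1&1\\1&1&-1&1\\1&1&1&-1\end{pmatrix}$. For $N\in\mathbb{N}$, $\mathcal{S}_N=\{(|p\rangle,|q\rangle)\in(\mathbb{R}^4)^{\otimes N}\oplus(\mathbb{R}^4)^{\otimes N}: |p\rangle,|q\rangle\text{ entrywise nonnegative},\ K^{\otimes N}|p\rangle=|q\rangle\}$, a polyhedral cone (the cone of Pauli PPT spectra). *)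

(* Defs.v *)
From HB Require Import structures.
From mathcomp Require Import all_boot all_order all_algebra.
Set Implicit Arguments. Unset Strict Implicit. Unset Printing Implicit Defensive.
Import Order.TTheory GRing.Theory Num.Theory.
Local Open Scope ring_scope.

(* Basis index set of (R^4)^{\otimes N}: multi-indices i = (i_1,...,i_N), i_k in {0,1,2,3}. *)
Definition idx (N : nat) : finType := {ffun 'I_N -> 'I_4}.

Notation vec R N := {ffun idx N -> R}.

Definition Kmx (R : realFieldType) : 'M[R]_4 :=
  \matrix_(a < 4, b < 4) (if a == b then - 2^-1 else 2^-1).

Definition Kpow (R : realFieldType) (N : nat) (p : vec R N) : vec R N :=
  [ffun i : idx N => \sum_(j : idx N) (\prod_(k < N) Kmx R (i k) (j k)) * p j].

Definition nonneg (R : realFieldType) (N : nat) (p : vec R N) : Prop :=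
  forall i, 0 <= p i.

Definition S_cone (R : realFieldType) (N : nat) (x : vec R N * vec R N) : Prop :=
  nonneg x.1 /\ nonneg x.2 /\ Kpow x.1 = x.2.

Definition tens (R : realFieldType) (N1 N2 : nat) (p1 : vec R N1) (p2 : vec R N2)
  : vec R (N1 + N2) :=
  [ffun i : idx (N1 + N2) =>
     p1 [ffun k : 'I_N1 => i (lshift N2 k)] * p2 [ffun k : 'I_N2 => i (rshift N1 k)]].

Definition extremal_ray (R : realFieldType) (N : nat) (C : vec R N * vec R N -> Prop)
  (x : vec R N * vec R N) : Prop :=
  [/\ C x, exists i, x.1 i != 0 \/ x.2 i != 0 &
      forall y z, C y -> C z -> (forall i, x.1 i = y.1 i + z.1 i /\ x.2 i = y.2 i + z.2 i) ->
        exists a : R, forall i, y.1 i = a * x.1 i /\ y.2 i = a * x.2 i].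

(* Main.v *)
Require Import Defs.
From HB Require Import structures.
From mathcomp Require Import all_boot all_order all_algebra.
From mathcomp Require Import ring lra.
Set Implicit Arguments. Unset Strict Implicit. Unset Printing Implicit Defensive.
Import Order.TTheory GRing.Theory Num.Theory.
Local Open Scope ring_scope.

Section S.
Variable R : realFieldType.

Definition Kp (N : nat) (i j : idx N) : R := \prod_(k < N) Kmx R (i k) (j k).

Lemma KpowE N (p : vec R N) i : Kpow p i = \sum_j Kp i j * p j.
Proof. by rewrite ffunE. Qed.

Lemma Kmx2 (a c : 'I_4) : \sum_(b < 4) Kmx R a b * Kmx R b c = (a == c)%:R.
Proof.
rewrite !big_ord_recr big_ord0 /= !mxE.
have h2 : (2:R) != 0 by rewrite pnatr_eq0.
case: a => [[|[|[|[|a]]]] Ha] //; case: c => [[|[|[|[|c]]]] Hc] //=;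
  rewrite /= ?eqxx; try field.
all: done.
Qed.

Lemma Kp2 N (i l : idx N) : \sum_j Kp i j * Kp j l = (i == l)%:R.
Proof.
rewrite /Kp.
under eq_bigr do rewrite -big_split /=.
rewrite -(bigA_distr_bigA (fun k b => Kmx R (i k) b * Kmx R b (l k))) /=.
under eq_bigr do rewrite Kmx2.
have [->|neq] := eqVneq i l.
  by rewrite big1 // => k _; rewrite eqxx.
have /existsP[k hk]: [exists k, i k != l k].
  apply: contraNT neq; rewrite negb_exists => /forallP H.
  apply/eqP/ffunP => k; apply/eqP; rewrite -[_ == _]negbK; exact: H k.
by rewrite (bigD1 k) //= (negbTE hk) mul0r.
Qed.

Lemma KpowK N (p : vec R N) : Kpow (Kpow p) = p.
Proof.
apply/ffunP => i; rewrite KpowE.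
under eq_bigr do rewrite KpowE mulr_sumr.
rewrite exchange_big /=.
under eq_bigr do (under eq_bigr do rewrite mulrA; rewrite -mulr_suml Kp2).
rewrite (bigD1 i) //= eqxx mul1r big1 ?addr0 // => j /negbTE; rewrite eq_sym => ->.
by rewrite mul0r.
Qed.

Lemma KpowL N (p u : vec R N) (x y : R) :
  Kpow [ffun i => x * p i + y * u i] = [ffun i => x * Kpow p i + y * Kpow u i].
Proof.
apply/ffunP => i; rewrite !ffunE !mulr_sumr -big_split /=.
by apply: eq_bigr => j _; rewrite ffunE; ring.
Qed.

Lemma KpowZ N (p : vec R N) (x : R) :
  Kpow [ffun i => x * p i] = [ffun i => x * Kpow p i].
Proof.
apply/ffunP => i; rewrite !ffunE !mulr_sumr.
by apply: eq_bigr => j _; rewrite ffunE; ring.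
Qed.


Section J.
Variables (N1 N2 : nat).

Definition lft (i : idx (N1 + N2)) : idx N1 := [ffun k => i (lshift N2 k)].
Definition rgt (i : idx (N1 + N2)) : idx N2 := [ffun k => i (rshift N1 k)].
Definition join (c : idx N1) (d : idx N2) : idx (N1 + N2) :=
  [ffun k => match split k with inl a => c a | inr b => d b end].

Lemma split_l (j : 'I_N1) : split (lshift N2 j) = inl j.
Proof. exact: (unsplitK (inl j)). Qed.
Lemma split_r (j : 'I_N2) : split (rshift N1 j) = inr j.
Proof. exact: (unsplitK (inr j)). Qed.
Lemma lft_join c d : lft (join c d) = c.
Proof. by apply/ffunP => k; rewrite !ffunE split_l. Qed.
Lemma rgt_join c d : rgt (join c d) = d.
Proof. by apply/ffunP => k; rewrite !ffunE split_r. Qed.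
Lemma join_lr i : join (lft i) (rgt i) = i.
Proof.
apply/ffunP => k; rewrite !ffunE; case: split_ordP => j ->; rewrite ffunE.
all: done.
Qed.

Lemma sum_join (F : idx (N1 + N2) -> R) :
  \sum_i F i = \sum_c \sum_d F (join c d).
Proof.
rewrite pair_bigA /= (reindex (fun cd : idx N1 * idx N2 => join cd.1 cd.2)) //.
exists (fun i => (lft i, rgt i)) => [[c d] _|i _] /=.
  by rewrite lft_join rgt_join.
by rewrite join_lr.
Qed.

Lemma Kp_join a b c d : Kp (join a b) (join c d) = Kp a c * Kp b d.
Proof.
rewrite /Kp big_split_ord /=; congr (_ * _); apply: eq_bigr => k _;
  by rewrite !ffunE ?split_l ?split_r.
Qed.

End J.

Lemma Kpow_join N1 N2 (Y : vec R (N1 + N2)) a b :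
  Kpow Y (join a b) = \sum_c \sum_d Kp a c * Kp b d * Y (join c d).
Proof.
rewrite KpowE sum_join; apply: eq_bigr => c _; apply: eq_bigr => d _.
by rewrite Kp_join.
Qed.

Lemma Kpow_prod N1 N2 (Y : vec R (N1 + N2)) (g : vec R N1) (f : vec R N2) a b :
  (forall c d, Y (join c d) = g c * f d) -> Kpow Y (join a b) = Kpow g a * Kpow f b.
Proof.
move=> H; rewrite Kpow_join !KpowE mulr_suml; apply: eq_bigr => c _.
rewrite mulr_sumr; apply: eq_bigr => d _; rewrite H; ring.
Qed.

Lemma tens_join N1 N2 (p1 : vec R N1) (p2 : vec R N2) c d :
  tens p1 p2 (join c d) = p1 c * p2 d.
Proof.
rewrite ffunE; congr (p1 _ * p2 _); [exact: lft_join | exact: rgt_join].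
Qed.

Lemma face N (p q u : vec R N) : extremal_ray (@S_cone R N) (p, q) ->
  (forall c, p c = 0 -> u c = 0) -> (forall a, q a = 0 -> Kpow u a = 0) ->
  exists al, forall c, u c = al * p c.
Proof.
case=> [[pn [qn e]] _ ext] hu hk; rewrite /= in pn qn e.
set C := \sum_i `|u i| / p i + \sum_i `|Kpow u i| / q i.
have s1 : 0 <= \sum_i `|u i| / p i.
  by rewrite sumr_ge0 // => i _; rewrite divr_ge0.
have s2 : 0 <= \sum_i `|Kpow u i| / q i.
  by rewrite sumr_ge0 // => i _; rewrite divr_ge0.
have C0 : 0 <= C by rewrite addr_ge0.
have C1 : 0 < C + 1 by lra.
set t := (C + 1)^-1.
have tpos : 0 < t by rewrite invr_gt0.
have tn0 : t != 0 by rewrite gt_eqF.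
have bnd : forall x w, 0 <= x -> (x = 0 -> w = 0) -> `|w| / x <= C -> `|t * w| <= x.
  move=> x w x0 hw hC; have [x00|xn0] := eqVneq x 0.
    by rewrite hw // mulr0 normr0 x00.
  have xp : 0 < x by rewrite lt0r xn0.
  rewrite ler_pdivrMr // in hC.
  rewrite normrM (gtr0_norm tpos) mulrC ler_pdivrMr //.
  have nw : 0 <= `|w| by [].
  nra.
have bu : forall i, `|t * u i| <= p i.
  move=> i; apply: bnd => //; first exact: hu.
  have h : `|u i| / p i <= \sum_i `|u i| / p i.
    rewrite (bigD1 i) //= lerDl sumr_ge0 // => j _; rewrite divr_ge0 //.
  by apply: le_trans h _; rewrite lerDl.
have bk : forall i, `|t * Kpow u i| <= q i.
  move=> i; apply: bnd => //; first exact: hk.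
  have h : `|Kpow u i| / q i <= \sum_i `|Kpow u i| / q i.
    rewrite (bigD1 i) //= lerDl sumr_ge0 // => j _; rewrite divr_ge0 //.
  by apply: le_trans h _; rewrite lerDr.
have h2 : 0 <= (2:R)^-1 by rewrite invr_ge0 ler0n.
pose y := ([ffun i => 2^-1 * p i + (2^-1 * t) * u i],
           [ffun i => 2^-1 * q i + (2^-1 * t) * Kpow u i]).
pose z := ([ffun i => 2^-1 * p i + (- (2^-1 * t)) * u i],
           [ffun i => 2^-1 * q i + (- (2^-1 * t)) * Kpow u i]).
have [||| al Hal] := ext y z.
- split; [|split]; rewrite /y /=; last by rewrite KpowL e.
    move=> i; rewrite ffunE -mulrA -mulrDr mulr_ge0 //.
    by move: (bu i); rewrite ler_norml => /andP[? ?]; lra.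
  move=> i; rewrite ffunE -mulrA -mulrDr mulr_ge0 //.
  by move: (bk i); rewrite ler_norml => /andP[? ?]; lra.
- split; [|split]; rewrite /z /=; last by rewrite KpowL e.
    move=> i; rewrite ffunE mulNr -mulrA -mulrBr mulr_ge0 //.
    by move: (bu i); rewrite ler_norml => /andP[? ?]; lra.
  move=> i; rewrite ffunE mulNr -mulrA -mulrBr mulr_ge0 //.
  by move: (bk i); rewrite ler_norml => /andP[? ?]; lra.
- by move=> i /=; rewrite !ffunE; split; field.
exists ((2 * al - 1) / t) => c.
have [h _] := Hal c; rewrite /= ffunE in h.
have h' : t * u c = (2 * al - 1) * p c.
  by rewrite mulrBl mul1r -mulrA -h; field.
by apply: (mulfI tn0); rewrite h'; field.
Qed.


Lemma nz N (p q : vec R N) : extremal_ray (@S_cone R N) (p, q) ->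
  (exists c, p c != 0) /\ (exists a, q a != 0).
Proof.
case=> [[_ [_ e]] [i hi] _]; rewrite /= in e hi.
have Kq : Kpow q = p by rewrite -e KpowK.
split.
  case: (boolP [exists c, p c != 0]) => [/existsP//|].
  rewrite negb_exists => /forallP H; exfalso.
  have p0 : forall c, p c = 0 by move=> c; move: (H c); rewrite negbK => /eqP.
  have q0 : q i = 0 by rewrite -e KpowE big1 // => j _; rewrite p0 mulr0.
  by case: hi; rewrite ?p0 ?q0 eqxx.
case: (boolP [exists c, q c != 0]) => [/existsP//|].
rewrite negb_exists => /forallP H; exfalso.
have q0 : forall c, q c = 0 by move=> c; move: (H c); rewrite negbK => /eqP.
have p0 : p i = 0 by rewrite -Kq KpowE big1 // => j _; rewrite q0 mulr0.
by case: hi; rewrite ?p0 ?q0 eqxx.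
Qed.

End S.

Theorem mainTheorem7 (R : realFieldType) (N1 N2 : nat)
  (p1 q1 : vec R N1) (p2 q2 : vec R N2) :
  extremal_ray (@S_cone R N1) (p1, q1) ->
  extremal_ray (@S_cone R N2) (p2, q2) ->
  S_cone (tens p1 p2, tens q1 q2) /\
  extremal_ray (@S_cone R (N1 + N2)) (tens p1 p2, tens q1 q2).
Proof.
move=> E1 E2.
have [[c0 hc0] [a0 ha0]] := nz E1.
have [[d0 hd0] [b0 hb0]] := nz E2.
have [[pn1 [qn1 e1]] _ _] := E1.
have [[pn2 [qn2 e2]] _ _] := E2.
rewrite /= in pn1 qn1 e1 pn2 qn2 e2.
have Kt : Kpow (tens p1 p2) = tens q1 q2.
  apply/ffunP => i; rewrite -[i]join_lr tens_join (Kpow_prod (g:=p1) (f:=p2)).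
    by rewrite e1 e2.
  by move=> c d; exact: tens_join.
have SC : S_cone (tens p1 p2, tens q1 q2).
  by split; [|split] => //= i; rewrite ffunE mulr_ge0.
split => //; split => //.
  by exists (join c0 d0); left; rewrite /= tens_join mulf_neq0.
move=> y z [yn1 [yn2 ey]] [zn1 [zn2 ez]] H.
have Y0 : forall i, tens p1 p2 i = 0 -> y.1 i = 0.
  move=> i h; have [h1 _] := H i; move: (yn1 i) (zn1 i); rewrite /= h in h1; lra.
have Y0' : forall i, tens q1 q2 i = 0 -> y.2 i = 0.
  move=> i h; have [_ h1] := H i; move: (yn2 i) (zn2 i); rewrite /= h in h1; lra.
have col : forall d, exists al, forall c, y.1 (join c d) = al * p1 c.
  move=> d; have := face (u := [ffun c => y.1 (join c d)]) E1.
  case=> [c hc|a ha|al Hal]; last by exists al => c; rewrite -Hal ffunE.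
    by rewrite ffunE Y0 // tens_join hc mul0r.
  pose w := [ffun d => Kpow [ffun c => y.1 (join c d)] a].
  have Kw : forall b, Kpow w b = 0.
    move=> b; rewrite KpowE.
    have : y.2 (join a b) = 0 by rewrite Y0' // tens_join ha mul0r.
    rewrite -ey Kpow_join => h; apply: eq_trans h.
    rewrite exchange_big /=; apply: eq_bigr => d' _.
    rewrite ffunE KpowE mulr_sumr; apply: eq_bigr => c _; rewrite ffunE; ring.
  have : w d = 0.
    by rewrite -(KpowK w) KpowE big1 // => j _; rewrite Kw mulr0.
  by rewrite ffunE.
have colE : forall c d, y.1 (join c d) = y.1 (join c0 d) / p1 c0 * p1 c.
  by move=> c d; have [al Hal] := col d; rewrite !Hal mulfK.
pose v := [ffun d => y.1 (join c0 d) / p1 c0].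
have [be Hbe] : exists be, forall d, v d = be * p2 d.
  apply: (face E2) => [d hd|b hb].
    by rewrite ffunE Y0 ?mul0r // tens_join hd mulr0.
  have : y.2 (join a0 b) = 0 by rewrite Y0' // tens_join hb mulr0.
  rewrite -ey (Kpow_prod (g:=p1) (f:=v)) => [|c d]; last by rewrite ffunE colE mulrC.
  by rewrite e1 => /eqP; rewrite mulf_eq0 (negbTE ha0) => /eqP.
have y1E : forall i, y.1 i = be * tens p1 p2 i.
  move=> i; rewrite -[i]join_lr colE tens_join.
  by have := Hbe (rgt i); rewrite ffunE => ->; ring.
exists be => i; split; first exact: y1E.
have yE : y.1 = [ffun i => be * tens p1 p2 i].
  by apply/ffunP => j; rewrite ffunE y1E.
by rewrite /= -ey yE KpowZ ffunE Kt.
Qed.
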